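(* Let $h:\mathbb{R}^d\to\mathbb{R}$ be convex, and let $\mathcal{S}=\{x:h(x)\le0\}$ be nonempty. Let $\mathcal{K}$ be a convex set with $\mathcal{S}\subseteq\mathcal{K}$. Assume there are $G,\sigma>0$ such that: - for all $x\in\mathcal{K}$ and all $s\in\partial h(x)$, $\|s\|\le G$; - whenever $x\in\mathcal{K}$ and $h(x)=0$, $\|s\|\ge\sigma$ for all $s\in\partial h(x)$. Let $x\in\mathcal{K}$ with $h(x)>0$, let $z=\Pi_{\mathcal{S}}(x)$, and let $s_x\in\partial h(x)$. Then there exist $\gamma\ge0$ and $s_z\in\partial h(z)$ such that: 1. $h(z)=0$; 2. $x-z=\gamma\frac{s_z}{\|s_z\|}$; 3. $\gamma\le\frac{h(x)}{\|s_z\|}$; 4. $\|s_z\|^2\le s_x^\top s_z$; 5. $\|s_x\|\ge\|s_z\|$.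
   Context: $\|\cdot\|$ is the Euclidean norm, $\Pi_{\mathcal{S}}$ is the Euclidean projection onto the closed convex set $\mathcal{S}$, and $\partial h(x)$ is the subdifferential of $h$ at $x$. *)

(* Defs.v *)
From HB Require Import structures.
From mathcomp Require Import all_boot all_order all_algebra.
From mathcomp Require Import reals.
Set Implicit Arguments. Unset Strict Implicit. Unset Printing Implicit Defensive.
Import Order.TTheory GRing.Theory Num.Theory.
Local Open Scope ring_scope.

Definition dotv {R : realType} {d : nat} (u v : 'rV[R]_d) : R :=
  \sum_(i < d) u ord0 i * v ord0 i.

Definition enorm {R : realType} {d : nat} (u : 'rV[R]_d) : R :=
  Num.sqrt (dotv u u).

Definition convex_fun {R : realType} {d : nat} (h : 'rV[R]_d -> R) : Prop :=
  forall (x y : 'rV[R]_d) (t : R), 0 <= t -> t <= 1 ->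
    h (t *: x + (1 - t) *: y) <= t * h x + (1 - t) * h y.

Definition convex_set {R : realType} {d : nat} (K : 'rV[R]_d -> Prop) : Prop :=
  forall (x y : 'rV[R]_d) (t : R), K x -> K y -> 0 <= t -> t <= 1 ->
    K (t *: x + (1 - t) *: y).

Definition subgrad {R : realType} {d : nat} (h : 'rV[R]_d -> R)
    (x s : 'rV[R]_d) : Prop :=
  forall y : 'rV[R]_d, h x + dotv s (y - x) <= h y.

Definition is_proj {R : realType} {d : nat} (S : 'rV[R]_d -> Prop)
    (x z : 'rV[R]_d) : Prop :=
  S z /\ forall y : 'rV[R]_d, S y -> enorm (x - z) <= enorm (x - y).

(* Main.v *)
Require Import Defs.
From HB Require Import structures.
From mathcomp Require Import all_boot all_order all_algebra.
From mathcomp Require Import classical_sets reals.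
From mathcomp Require Import ring lra.
Import Order.TTheory GRing.Theory Num.Theory.
Local Open Scope ring_scope.

Section D.
Context {R : realType} {d : nat}.
Implicit Types (u v w : 'rV[R]_d) (a : R).

Lemma dotvC u v : dotv u v = dotv v u.
Proof. by rewrite /dotv; apply: eq_bigr => i _; rewrite mulrC. Qed.
Lemma dotvDl u v w : dotv (u + v) w = dotv u w + dotv v w.
Proof. by rewrite /dotv -big_split; apply: eq_bigr => i _; rewrite !mxE mulrDl. Qed.
Lemma dotvZl a u v : dotv (a *: u) v = a * dotv u v.
Proof. by rewrite /dotv mulr_sumr; apply: eq_bigr => i _; rewrite !mxE mulrA. Qed.
Lemma dotvNl u v : dotv (- u) v = - dotv u v.
Proof. by rewrite -scaleN1r dotvZl mulN1r. Qed.
Lemma dotvBl u v w : dotv (u - v) w = dotv u w - dotv v w.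
Proof. by rewrite dotvDl dotvNl. Qed.
Lemma dotvDr u v w : dotv w (u + v) = dotv w u + dotv w v.
Proof. by rewrite dotvC dotvDl !(dotvC w). Qed.
Lemma dotvZr a u v : dotv v (a *: u) = a * dotv v u.
Proof. by rewrite dotvC dotvZl dotvC. Qed.
Lemma dotvNr u v : dotv v (- u) = - dotv v u.
Proof. by rewrite dotvC dotvNl dotvC. Qed.
Lemma dotvBr u v w : dotv w (u - v) = dotv w u - dotv w v.
Proof. by rewrite dotvDr dotvNr. Qed.
Lemma dotv0l v : dotv 0 v = 0.
Proof. by rewrite -(scale0r 0) dotvZl mul0r. Qed.
Lemma dotv_ge0 u : 0 <= dotv u u.
Proof. by apply: sumr_ge0 => i _; rewrite -expr2 sqr_ge0. Qed.
Lemma dotv_eq0 u : dotv u u = 0 -> u = 0.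
Proof.
move=> /eqP; rewrite psumr_eq0 => [/allP H|i _]; last by rewrite -expr2 sqr_ge0.
apply/rowP => i; rewrite !mxE.
by have /implyP/(_ isT) := H i (mem_index_enum _); rewrite mulf_eq0 orbb => /eqP.
Qed.
Lemma enorm_sq u : enorm u ^+ 2 = dotv u u.
Proof. by rewrite /enorm sqr_sqrtr // dotv_ge0. Qed.
Lemma enorm_ge0 u : 0 <= enorm u.
Proof. exact: sqrtr_ge0. Qed.
End D.
Theorem lemma3 (R : realType) (d : nat) (h : 'rV[R]_d -> R)
  (K : 'rV[R]_d -> Prop) (G sigma : R)
  (hconv : convex_fun h)
  (Sne : exists x0 : 'rV[R]_d, h x0 <= 0)
  (Kconv : convex_set K)
  (SK : forall y : 'rV[R]_d, h y <= 0 -> K y)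
  (Gpos : 0 < G) (sigmapos : 0 < sigma)
  (Gbound : forall y s : 'rV[R]_d, K y -> subgrad h y s -> enorm s <= G)
  (sigmabound : forall y s : 'rV[R]_d, K y -> h y = 0 -> subgrad h y s ->
                  sigma <= enorm s)
  (x z sx : 'rV[R]_d)
  (xK : K x) (hxpos : 0 < h x)
  (zproj : is_proj (fun y => h y <= 0) x z)
  (sxsub : subgrad h x sx) :
  exists (gamma : R) (sz : 'rV[R]_d),
    0 <= gamma /\ subgrad h z sz /\
    [/\ h z = 0,
        x - z = gamma *: ((enorm sz)^-1 *: sz),
        gamma <= h x / enorm sz,
        enorm sz ^+ 2 <= dotv sx sz
      & enorm sz <= enorm sx].
Proof.
case: zproj => hzle zmin.
set n : 'rV[R]_d := x - z.
have nE : x - z = n by [].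
clearbody n.
have combE : forall (t : R) (y y' : 'rV[R]_d),
    t *: y + (1 - t) *: y' - z = t *: (y - z) + (1 - t) *: (y' - z).
  by move=> t y y'; apply/rowP => i; rewrite !mxE; ring.
have P : forall y, h y <= 0 -> dotv n (y - z) <= 0.
  move=> y hy; rewrite leNgt; apply/negP => apos.
  set a := dotv n (y - z) in apos.
  set b := dotv (y - z) (y - z).
  have b0 : 0 <= b by exact: dotv_ge0.
  pose t := a / (a + b).
  have abpos : 0 < a + b by lra.
  have t0 : 0 < t by rewrite divr_gt0.
  have t1 : t <= 1 by rewrite ler_pdivrMr // mul1r; lra.
  have hyt : h (t *: y + (1 - t) *: z) <= 0.
    apply: le_trans (hconv y z t (ltW t0) t1) _; nra.
  have := zmin _ hyt.
  have -> : x - (t *: y + (1 - t) *: z) = n - t *: (y - z).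
    by rewrite -nE; apply/rowP => i; rewrite !mxE; ring.
  rewrite nE.
  rewrite /enorm ler_sqrt ?dotv_ge0 //.
  rewrite dotvBl !dotvBr !dotvZl !dotvZr (dotvC (y - z) n) -/a -/b.
  move=> H.
  have : t * (t * b - 2 * a) < 0.
    rewrite pmulr_rlt0 //.
    have : t * b <= a.
      rewrite /t mulrAC ler_pdivrMr //; nra.
    lra.
  lra.

have npos : 0 < dotv n n.
  rewrite lt_neqAle dotv_ge0 andbT; apply/eqP => /esym/dotv_eq0 n0.
  have xz : x = z by apply/eqP; rewrite -subr_eq0 nE n0.
  by move: hzle; rewrite -xz; lra.
have Pstrict : forall y, 0 < dotv n (y - z) -> 0 < h y.
  by move=> y ay; rewrite ltNge; apply/negP => /P; lra.
have hz0 : h z = 0.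
  apply/eqP; rewrite eq_le hzle /= leNgt; apply/negP => hzneg.
  pose t := - h z / (h x - h z).
  have t0 : 0 < t by rewrite /t divr_gt0 //; lra.
  have t1 : t <= 1 by rewrite /t ler_pdivrMr; lra.
  have e : t * h x + (1 - t) * h z = 0.
    rewrite /t; field; apply/eqP => ?; lra.
  have : h (t *: x + (1 - t) *: z) <= 0.
    by apply: le_trans (hconv x z t (ltW t0) t1) _; rewrite e.
  move/P; rewrite combE nE subrr scaler0 addr0 dotvZr.
  by rewrite pmulr_rle0 // leNgt npos.
have L : forall y y', dotv n (y - z) <= 0 -> 0 < dotv n (y' - z) ->
    dotv n (y - z) * h y' <= h y * dotv n (y' - z).
  move=> y y' ay by'.
  set a := dotv n (y - z) in ay *; set b := dotv n (y' - z) in by' *.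
  rewrite leNgt; apply/negP => c0pos.
  set c0 := a * h y' - h y * b.
  have c00 : 0 < c0 by rewrite /c0 subr_gt0.
  pose E := `|h y' - h y|.
  have E0 : 0 <= E by exact: normr_ge0.
  have DE : h y' - h y <= E by exact: ler_norm.
  have den : 0 < c0 + b * E by nra.
  pose eta := b * c0 / (c0 + b * E).
  have eta0 : 0 < eta by rewrite /eta divr_gt0 // mulr_gt0.
  have etab : eta <= b by rewrite /eta ler_pdivrMr //; nra.
  have etaE : eta * E <= c0 by rewrite /eta mulrAC ler_pdivrMr //; nra.
  have ba : 0 < b - a by lra.
  pose lam := (b - eta) / (b - a).
  have lam0 : 0 <= lam by rewrite /lam divr_ge0 //; lra.
  have lam1 : lam <= 1 by rewrite /lam ler_pdivrMr //; lra.
  have hp : h (lam *: y + (1 - lam) *: y') <= 0.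
    apply: le_trans (hconv y y' lam lam0 lam1) _.
    have key : (lam * h y + (1 - lam) * h y') * (b - a)
               = - c0 + eta * (h y' - h y).
      by rewrite /lam /c0; field; apply/eqP => ?; lra.
    have : eta * (h y' - h y) <= eta * E by rewrite ler_wpM2l // ltW.
    nra.
  have := P _ hp; rewrite combE !dotvDr !dotvZr -/a -/b.
  have -> : lam * a + (1 - lam) * b = eta.
    by rewrite /lam; field; apply/eqP => ?; lra.
  lra.
pose A : set R := fun r => exists2 y, dotv n (y - z) < 0 & r = h y / dotv n (y - z).
have Ane : exists r, A r.
  exists (h (z - n) / dotv n (z - n - z)); exists (z - n) => //.
  have -> : z - n - z = - n by apply/rowP => i; rewrite !mxE; ring.
  by rewrite dotvNr oppr_lt0.
have bnd : forall y y', dotv n (y - z) < 0 -> 0 < dotv n (y' - z) ->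
    h y / dotv n (y - z) <= h y' / dotv n (y' - z).
  move=> y y' ay by'; have := L y y' (ltW ay) by'.
  set a := dotv n (y - z) in ay *; set b := dotv n (y' - z) in by' *.
  set q := h y / a.
  have -> : h y = q * a by rewrite /q divfK // lt_eqF.
  move=> H; rewrite ler_pdivlMr //; nra.
have Aub : ubound A (h x / dotv n n).
  move=> r [y ay ->]; have := bnd y x ay; rewrite nE; exact.
have hsA : has_sup A by split => //; exists (h x / dotv n n).
pose c := sup A.
have ci : forall y', 0 < dotv n (y' - z) -> c <= h y' / dotv n (y' - z).
  move=> y' by'; apply: ge_sup Ane _ => r [y ay ->]; exact: bnd.
have cii : forall y, dotv n (y - z) < 0 -> h y / dotv n (y - z) <= c.
  move=> y ay; apply: (sup_upper_bound hsA); by exists y.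
have sub : forall y, c * dotv n (y - z) <= h y.
  move=> y; case: (ltgtP (dotv n (y - z)) 0) => ay.
  - have := cii y ay; set q := h y / dotv n (y - z).
    have -> : h y = q * dotv n (y - z) by rewrite /q divfK // lt_eqF.
    nra.
  - have := ci y ay; set q := h y / dotv n (y - z).
    have -> : h y = q * dotv n (y - z) by rewrite /q divfK // gt_eqF.
    nra.
  - rewrite ay mulr0; have := L y x; rewrite ay mul0r nE => /(_ (lexx 0) npos).
    by rewrite pmulr_lge0.
have cpos : 0 < c.
  rewrite ltNge; apply/negP => cle.
  have : sigma <= enorm (0 : 'rV[R]_d).
    have := sigmabound z 0 (SK _ hzle) hz0; apply => y; rewrite dotv0l hz0 addr0.
    case: (ltP 0 (dotv n (y - z))) => ay; first exact/ltW/Pstrict.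
    have := sub y; nra.
  rewrite /enorm dotv0l sqrtr0; lra.
have sub' : subgrad h z (c *: n).
  by move=> y; rewrite hz0 add0r dotvZl; exact: sub.
pose m := enorm n.
have mpos : 0 < m by rewrite /m /enorm sqrtr_gt0.
have m2 : m ^+ 2 = dotv n n by exact: enorm_sq.
have esz : enorm (c *: n) = c * m.
  rewrite /enorm dotvZl dotvZr mulrA -expr2 sqrtrM ?sqr_ge0 // sqrtr_sqr.
  by rewrite gtr0_norm.
have Z4 : dotv (c *: n) (c *: n) <= dotv sx (c *: n).
  have h1 := sub' x; rewrite hz0 add0r nE dotvZl in h1.
  have h2 := sxsub z; rewrite hz0 in h2.
  have zx : z - x = - n by rewrite -nE opprB.
  rewrite zx dotvNr in h2.
  rewrite !dotvZr dotvZl; nra.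
exists m, (c *: n); split; first exact: ltW.
split; first exact: sub'.
split.
- exact: hz0.
- rewrite esz !scalerA.
  have -> : m / (c * m) * c = 1.
    by field; rewrite ?gt_eqF.
  by rewrite scale1r.
- rewrite esz ler_pdivlMr ?mulr_gt0 //.
  have := ci x; rewrite nE => /(_ npos); rewrite ler_pdivlMr // -m2.
  move=> H; apply: le_trans H; rewrite expr2; lra.
- by rewrite enorm_sq.
- rewrite /enorm ler_sqrt ?dotv_ge0 //.
  have := dotv_ge0 (sx - c *: n).
  rewrite dotvBl !dotvBr (dotvC (c *: n) sx); lra.
Qed.
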